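(* Let $X$ be any one of the sequences $F,L,J,j,P,Q$. For integers $a,b,c,d,e$ put $$\Delta=X_{d-a}X_{e-b}-X_{e-a}X_{d-b},\quad \Delta_1=X_{d-c}X_{e-b}-X_{e-c}X_{d-b},\quad \Delta_2=X_{d-a}X_{e-c}-X_{e-a}X_{d-c}.$$ Let $k,m$ be integers. Provided every denominator appearing below is nonzero and, when $k<0$, the base of every power appearing is nonzero: $$\sum_{r=0}^k\left(\frac{\Delta}{\Delta_1}\right)^rX_{m-k(a-c)-b+c+(a-c)r}=\frac{\Delta}{\Delta_2}\left(\frac{\Delta}{\Delta_1}\right)^kX_m-\frac{\Delta_1}{\Delta_2}X_{m-(k+1)(a-c)},$$ $$\sum_{r=0}^k\left(\frac{\Delta}{\Delta_2}\right)^rX_{m-k(b-c)-a+c+(b-c)r}=\frac{\Delta}{\Delta_1}\left(\frac{\Delta}{\Delta_2}\right)^kX_m-\frac{\Delta_2}{\Delta_1}X_{m-(k+1)(b-c)},$$ $$\sum_{r=0}^k\left(\frac{-\Delta_2}{\Delta_1}\right)^rX_{m-k(a-b)+b-c+(a-b)r}=\frac{\Delta_2}{\Delta}\left(\frac{-\Delta_2}{\Delta_1}\right)^kX_m+\frac{\Delta_1}{\Delta}X_{m-(k+1)(a-b)}.$$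
   Context: All sequences are indexed by $n\in\mathbb Z$. Fibonacci numbers $F_n$ and Lucas numbers $L_n$: $F_n=F_{n-1}+F_{n-2}$, $L_n=L_{n-1}+L_{n-2}$ for all $n\in\mathbb Z$, with $F_0=0,F_1=1,L_0=2,L_1=1$ (so $F_{-n}=(-1)^{n-1}F_n$, $L_{-n}=(-1)^nL_n$). Jacobsthal numbers $J_n$ and Jacobsthal–Lucas numbers $j_n$: $J_n=J_{n-1}+2J_{n-2}$, $j_n=j_{n-1}+2j_{n-2}$ for all $n\in\mathbb Z$, with $J_0=0,J_1=1,j_0=2,j_1=1$ (so $J_{-n}=(-1)^{n-1}2^{-n}J_n$, $j_{-n}=(-1)^n2^{-n}j_n$, rational for negative index). Pell numbers $P_n$ and Pell–Lucas numbers $Q_n$: $P_n=2P_{n-1}+P_{n-2}$, $Q_n=2Q_{n-1}+Q_{n-2}$ for all $n\in\mathbb Z$, with $P_0=0,P_1=1,Q_0=2,Q_1=2$ (so $P_{-n}=(-1)^{n-1}P_n$, $Q_{-n}=(-1)^nQ_n$). Summation convention: for an integer $k<0$, $\sum_{r=0}^k f_r$ means $-\sum_{r=k+1}^{-1} f_r$ (in particular it equals $0$ when $k=-1$). *)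

(* Defs.v *)
From HB Require Import structures.
From mathcomp Require Import all_boot all_order all_algebra.
Set Implicit Arguments. Unset Strict Implicit. Unset Printing Implicit Defensive.
Import Order.TTheory GRing.Theory Num.Theory.
Local Open Scope ring_scope.

(* Second-order linear recurrence W_n = p W_{n-1} + q W_{n-2} on all of Z,
   with W_0 = w0, W_1 = w1 (q <> 0 in all our instances). *)
Fixpoint recfwd (p q w0 w1 : rat) (n : nat) : rat * rat :=
  match n with
  | 0%N => (w0, w1)
  | n'.+1 => let '(x, y) := recfwd p q w0 w1 n' in (y, p * y + q * x)
  end.
(* recbwd n = (W_{-n}, W_{-n+1}) *)
Fixpoint recbwd (p q w0 w1 : rat) (n : nat) : rat * rat :=
  match n with
  | 0%N => (w0, w1)
  | n'.+1 => let '(x, y) := recbwd p q w0 w1 n' in ((y - p * x) / q, x)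
  end.
Definition recseq (p q w0 w1 : rat) (n : int) : rat :=
  match n with
  | Posz k => (recfwd p q w0 w1 k).1
  | Negz k => (recbwd p q w0 w1 k.+1).1   (* Negz k = -(k+1) *)
  end.

Definition Fib : int -> rat := recseq 1 1 0 1.
Definition Luc : int -> rat := recseq 1 1 2 1.
Definition Jac : int -> rat := recseq 1 2 0 1.
Definition JacL : int -> rat := recseq 1 2 2 1.
Definition Pell : int -> rat := recseq 2 1 0 1.
Definition PellL : int -> rat := recseq 2 1 2 2.

(* sum_{r=0}^k f r, with the convention: for k < 0 it is -sum_{r=k+1}^{-1} f r. *)
Definition sumZ (k : int) (f : int -> rat) : rat :=
  match k with
  | Posz n => \sum_(0 <= i < n.+1) f (Posz i)
  | Negz n => - \sum_(0 <= i < n) f (- (Posz i.+1))  (* k = -(n+1); r ranges over -n..-1 *)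
  end.

(* Main.v *)
Require Import Defs.
From HB Require Import structures.
From mathcomp Require Import all_boot all_order all_algebra.
From mathcomp Require Import zify ring.
Import Order.TTheory GRing.Theory Num.Theory.
Local Open Scope ring_scope.

Definition isrec (p q : rat) (s : int -> rat) := forall n : int, s (n + 2) = p * s (n + 1) + q * s n.

Lemma recfwdS p q w0 w1 n : recfwd p q w0 w1 n.+1 =
  ((recfwd p q w0 w1 n).2, p * (recfwd p q w0 w1 n).2 + q * (recfwd p q w0 w1 n).1).
Proof. by rewrite /=; case: (recfwd p q w0 w1 n). Qed.

Lemma recbwdS p q w0 w1 n : recbwd p q w0 w1 n.+1 =
  (((recbwd p q w0 w1 n).2 - p * (recbwd p q w0 w1 n).1) / q, (recbwd p q w0 w1 n).1).
Proof. by rewrite /=; case: (recbwd p q w0 w1 n). Qed.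

Lemma recseq_rec p q w0 w1 : q != 0 -> isrec p q (recseq p q w0 w1).
Proof.
move=> hq [k|k].
- have -> : Posz k + 2 = Posz k.+2 by lia.
  have -> : Posz k + 1 = Posz k.+1 by lia.
  by rewrite /recseq !recfwdS /=.
- case: k => [|[|j]].
  + have -> : Negz 0 + 2 = Posz 1 by lia.
    have -> : Negz 0 + 1 = Posz 0 by lia.
    rewrite /recseq /=; by field.
    have -> : Negz 1 + 2 = Posz 0 by lia.
    have -> : Negz 1 + 1 = Negz 0 by lia.
    rewrite /recseq /=; by field.
  + have -> : Negz j.+2 + 2 = Negz j by lia.
    have -> : Negz j.+2 + 1 = Negz j.+1 by lia.
    rewrite /recseq [recbwd _ _ _ _ j.+3]recbwdS [recbwd _ _ _ _ j.+2]recbwdS /=.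
    by field.
Qed.

Lemma rec_uniq p q s t : q != 0 -> isrec p q s -> isrec p q t ->
  s 0 = t 0 -> s 1 = t 1 -> forall n, s n = t n.
Proof.
move=> hq hs ht h0 h1.
have fw : forall k : nat, s (Posz k) = t (Posz k) /\ s (Posz k.+1) = t (Posz k.+1).
  elim=> [|k [IH1 IH2]]; first by split.
  split=> //.
  have -> : Posz k.+2 = Posz k + 2 by lia.
  rewrite hs ht (_ : Posz k + 1 = Posz k.+1); last by lia.
  by rewrite IH1 IH2.
have bw : forall k : nat, s (- Posz k) = t (- Posz k) /\ s (- Posz k + 1) = t (- Posz k + 1).
  elim=> [|k [IH1 IH2]]; first by split.
  have e : s (- Posz k.+1 + 2) = t (- Posz k.+1 + 2).
    by rewrite (_ : - Posz k.+1 + 2 = - Posz k + 1) //; lia.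
  have e' : s (- Posz k.+1 + 1) = t (- Posz k.+1 + 1).
    by rewrite (_ : - Posz k.+1 + 1 = - Posz k) //; lia.
  split=> //.
  rewrite hs ht e' in e.
  apply: (mulfI hq).
  by move/addrI: e.
move=> [k|k]; first by case: (fw k).
rewrite NegzE; by case: (bw k.+1).
Qed.

Lemma shift_rec p q s a : isrec p q s -> isrec p q (fun n => s (n - a)).
Proof.
move=> hs n /=.
rewrite (_ : n + 2 - a = (n - a) + 2); last by ring.
by rewrite hs (_ : n - a + 1 = n + 1 - a) //; ring.
Qed.

Lemma comb_rec p q s t x y : isrec p q s -> isrec p q t ->
  isrec p q (fun n => x * s n + y * t n).
Proof. move=> hs ht n /=; rewrite hs ht; ring. Qed.

Lemma decomp p q w0 w1 (a n : int) : q != 0 ->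
  recseq p q w0 w1 (n - a) = recseq p q w0 w1 (- a) * recseq p q 1 0 n
                           + recseq p q w0 w1 (1 - a) * recseq p q 0 1 n.
Proof.
move=> hq.
have H := (rec_uniq _ _ _ _ hq (shift_rec _ _ _ a (recseq_rec _ _ w0 w1 hq))
  (comb_rec _ _ _ _ (recseq p q w0 w1 (- a)) (recseq p q w0 w1 (1 - a)) (recseq_rec _ _ 1 0 hq) (recseq_rec _ _ 0 1 hq))).
apply: H.
- by rewrite /= sub0r mulr1 mulr0 addr0.
- by rewrite /= mulr0 mulr1 add0r.
Qed.

Lemma ident p q w0 w1 (a b c d e n : int) : q != 0 ->
  let X := recseq p q w0 w1 in
  let D  := X (d - a) * X (e - b) - X (e - a) * X (d - b) in
  let D1 := X (d - c) * X (e - b) - X (e - c) * X (d - b) in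
  let D2 := X (d - a) * X (e - c) - X (e - a) * X (d - c) in
  D * X (n - c) = D1 * X (n - a) + D2 * X (n - b).
Proof.
move=> hq X D D1 D2; rewrite /D /D1 /D2 /X.
rewrite (decomp _ _ _ _ a d hq) (decomp _ _ _ _ b e hq) (decomp _ _ _ _ a e hq) (decomp _ _ _ _ b d hq) (decomp _ _ _ _ c d hq) (decomp _ _ _ _ c e hq) (decomp _ _ _ _ a n hq) (decomp _ _ _ _ b n hq) (decomp _ _ _ _ c n hq).
ring.
Qed.

Lemma eq_sumZ k f g : (forall r, f r = g r) -> sumZ k f = sumZ k g.
Proof. by move=> h; case: k => n /=; [|congr (- _)]; apply: eq_bigr => i _. Qed.

Lemma sumZ_tele (h : int -> rat) k : sumZ k (fun r => h r - h (r - 1)) = h k - h (-1).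
Proof.
case: k => n /=.
- elim: n => [|n IH]; first by rewrite big_nat1 sub0r.
  rewrite big_nat_recr //= IH (_ : Posz n.+1 - 1 = Posz n); last by lia.
  by rewrite addrC addrA subrK.
- elim: n => [|n IH].
  + by rewrite big_geq // oppr0 (_ : Negz 0 = -1) ?subrr //; lia.
  + rewrite big_nat_recr //= opprD IH (_ : - Posz n.+1 = Negz n); last by lia.
    rewrite (_ : Negz n - 1 = Negz n.+1); last by lia.
    by rewrite opprB addrC addrA subrK.
Qed.

Lemma gen (A B C : rat) (Y g : int -> rat) (k : int) :
  B != 0 -> C != 0 -> (k < 0 -> A / B != 0) ->
  (forall r, g r = (A / B) ^ r * ((A * Y (k - r) - B * Y (k - r + 1)) / C)) ->
  sumZ k g = A / C * (A / B) ^ k * Y 0 - B / C * Y (k + 1).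
Proof.
move=> hB hC hk hg.
have [A0|hA] := eqVneq A 0.
- subst A.
  case: k hk hg => [n _|n hk]; last by rewrite mul0r eqxx in hk; move: (hk isT).
  move=> hg /=.
  rewrite big_nat_recl // big1 => [|i _]; last first.
    by rewrite hg /= exprSz !mul0r.
  rewrite hg /= !mul0r addr0 sub0r -exprnP expr0 mul1r (_ : Posz n - 0%Z = n); last by lia.
  by field.
- have hr : A / B != 0 by rewrite mulf_neq0 ?invr_eq0.
  set h := fun r => A / C * (A / B) ^ r * Y (k - r).
  rewrite (eq_sumZ k g (fun r => h r - h (r - 1))) => [|r].
    rewrite sumZ_tele /h subrr.
    rewrite (_ : k - -1 = k + 1); last by ring.
    rewrite exprN1; field; by rewrite hA hB hC.
  rewrite hg /h.
  rewrite expfzDr // exprN1 (_ : k - (r + -1) = k - r + 1); last by ring.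
  field; by rewrite hA hB hC.
Qed.

Lemma six_rec X :
  X = Fib \/ X = Luc \/ X = Jac \/ X = JacL \/ X = Pell \/ X = PellL ->
  exists p q w0 w1, q != 0 /\ X = recseq p q w0 w1.
Proof.
case=> [->|[->|[->|[->|[->|->]]]]].
- by exists 1, 1, 0, 1; split; [rewrite oner_eq0|].
- by exists 1, 1, 2, 1; split; [rewrite oner_eq0|].
- by exists 1, 2, 0, 1; split; [rewrite pnatr_eq0|].
- by exists 1, 2, 2, 1; split; [rewrite pnatr_eq0|].
- by exists 2, 1, 0, 1; split; [rewrite oner_eq0|].
- by exists 2, 1, 2, 2; split; [rewrite oner_eq0|].
Qed.

Theorem theorem5 (X : int -> rat)
  (hX : X = Fib \/ X = Luc \/ X = Jac \/ X = JacL \/ X = Pell \/ X = PellL)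
  (a b c d e k m : int) :
  let D  := X (d - a) * X (e - b) - X (e - a) * X (d - b) in
  let D1 := X (d - c) * X (e - b) - X (e - c) * X (d - b) in
  let D2 := X (d - a) * X (e - c) - X (e - a) * X (d - c) in
  [/\ (D1 != 0 -> D2 != 0 -> (k < 0 -> D / D1 != 0) ->
        sumZ k (fun r => (D / D1) ^ r * X (m - k * (a - c) - b + c + (a - c) * r))
        = D / D2 * (D / D1) ^ k * X m - D1 / D2 * X (m - (k + 1) * (a - c))),
      (D1 != 0 -> D2 != 0 -> (k < 0 -> D / D2 != 0) ->
        sumZ k (fun r => (D / D2) ^ r * X (m - k * (b - c) - a + c + (b - c) * r))
        = D / D1 * (D / D2) ^ k * X m - D2 / D1 * X (m - (k + 1) * (b - c)))
    & (D1 != 0 -> D != 0 -> (k < 0 -> - D2 / D1 != 0) ->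
        sumZ k (fun r => (- D2 / D1) ^ r * X (m - k * (a - b) + b - c + (a - b) * r))
        = D2 / D * (- D2 / D1) ^ k * X m + D1 / D * X (m - (k + 1) * (a - b)))].
Proof.
have [p [q [w0 [w1 [hq EX]]]]] := six_rec _ hX.
subst X; move=> D D1 D2.
set X := recseq p q w0 w1.
have I n : D * X (n - c) = D1 * X (n - a) + D2 * X (n - b).
  exact: (ident p q w0 w1 a b c d e n hq).
split.
- move=> h1 h2 hk.
  rewrite (gen D D1 D2 (fun j => X (m - j * (a - c))) _ k h1 h2 hk) => [|r].
    by rewrite mul0r subr0.
  congr (_ * _).
  set n := m - k * (a - c) + c + (a - c) * r.
  rewrite (_ : m - (k - r) * (a - c) = n - c); last by rewrite /n; ring.
  rewrite (_ : m - (k - r + 1) * (a - c) = n - a); last by rewrite /n; ring.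
  rewrite (_ : m - k * (a - c) - b + c + (a - c) * r = n - b); last by rewrite /n; ring.
  rewrite I; field; by rewrite h2.
- move=> h1 h2 hk.
  rewrite (gen D D2 D1 (fun j => X (m - j * (b - c))) _ k h2 h1 hk) => [|r].
    by rewrite mul0r subr0.
  congr (_ * _).
  set n := m - k * (b - c) + c + (b - c) * r.
  rewrite (_ : m - (k - r) * (b - c) = n - c); last by rewrite /n; ring.
  rewrite (_ : m - (k - r + 1) * (b - c) = n - b); last by rewrite /n; ring.
  rewrite (_ : m - k * (b - c) - a + c + (b - c) * r = n - a); last by rewrite /n; ring.
  rewrite I; field; by rewrite h1.
- move=> h1 h0 hk.
  have h0' : - D != 0 by rewrite oppr_eq0.
  rewrite (gen (- D2) D1 (- D) (fun j => X (m - j * (a - b))) _ k h1 h0' hk) => [|r].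
    rewrite mul0r subr0; field; by rewrite h0.
  congr (_ * _).
  set n := m - k * (a - b) + b + (a - b) * r.
  rewrite (_ : m - (k - r) * (a - b) = n - b); last by rewrite /n; ring.
  rewrite (_ : m - (k - r + 1) * (a - b) = n - a); last by rewrite /n; ring.
  rewrite (_ : m - k * (a - b) + b - c + (a - b) * r = n - c); last by rewrite /n; ring.
  apply: (mulfI h0); rewrite I; field; by rewrite h0.
Qed.
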